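(* Let $G$ be a group and $p$ a prime number. If the set $\mathrm{val}_{X^p}(G)\cup \mathrm{val}_{[X,Y]}(G)$ does not generate $G$ in finitely many steps, then for every non-principal ultrafilter $\mathcal U$ on $\omega$, the ultrapower $G^{\omega}/\mathcal U$ admits a surjective homomorphism onto $\mathbb Z/p\mathbb Z$.
   Context: For a group $G$ and a group word $w(\bar X)$, $\mathrm{val}_w(G)=\{w(\bar g) : \bar g \text{ a tuple of elements of } G\}$; thus $\mathrm{val}_{X^p}(G)=\{g^p : g\in G\}$ and $\mathrm{val}_{[X,Y]}(G)=\{[g,h] : g,h\in G\}$. A generating subset $S$ of a group $G$ generates $G$ in $n$ steps if $G = (S^{\pm1}\cup\{1\})^n$, i.e. every element of $G$ is a product of $n$ elements of $S\cup S^{-1}\cup\{1\}$; ''$S$ generates $G$ in finitely many steps'' means this holds for some $n\in\mathbb N$. $G^{\omega}/\mathcal U$ is the ultrapower of $G$ with respect to $\mathcal U$. *)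

(* Defs.v *)
(* abstract (possibly infinite) groups are given
   by an explicit record with the group axioms. *)
From mathcomp Require Import all_boot all_algebra.
From Stdlib Require Import List.

Set Implicit Arguments.
Unset Strict Implicit.
Unset Printing Implicit Defensive.

Record Grp := MkGrp {
  carrier :> Type;
  gmul : carrier -> carrier -> carrier;
  ginv : carrier -> carrier;
  gone : carrier;
  gmulA : forall x y z, gmul x (gmul y z) = gmul (gmul x y) z;
  gmul1 : forall x, gmul gone x = x;
  gmulV : forall x, gmul (ginv x) x = gone;
  gmul1r : forall x, gmul x gone = x;
  gmulVr : forall x, gmul x (ginv x) = gone
}.

Section GroupDefs.
Variable G : Grp.

Fixpoint gpow (g : G) (n : nat) : G :=
  match n with 0 => gone G | S k => gmul g (gpow g k) end.

Definition gcomm (g h : G) : G :=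
  gmul (gmul (ginv g) (ginv h)) (gmul g h).

Definition val_pow (p : nat) (x : G) : Prop := exists g, x = gpow g p.
Definition val_comm (x : G) : Prop := exists g h, x = gcomm g h.

Definition gprod (l : list G) : G := fold_right (@gmul G) (gone G) l.

Definition generates_in_steps (S : G -> Prop) (n : nat) : Prop :=
  forall g : G, exists l : list G,
    length l = n /\
    (forall x, In x l -> S x \/ S (ginv x) \/ x = gone G) /\
    gprod l = g.

Definition generates_finitely (S : G -> Prop) : Prop :=
  exists n, generates_in_steps S n.
End GroupDefs.

Definition ultrafilter (U : (nat -> Prop) -> Prop) : Prop :=
  U (fun _ => True) /\
  ~ U (fun _ => False) /\
  (forall A B : nat -> Prop, U A -> (forall n, A n -> B n) -> U B) /\
  (forall A B : nat -> Prop, U A -> U B -> U (fun n => A n /\ B n)) /\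
  (forall A : nat -> Prop, U A \/ U (fun n => ~ A n)).

Definition nonprincipal (U : (nat -> Prop) -> Prop) : Prop :=
  forall k : nat, ~ U (fun n => n = k).

(* The ultrapower G^omega/U is the quotient of the direct power nat -> G
   (pointwise operations) by  f ~ g  iff  {n | f n = g n} ∈ U.
   A homomorphism G^omega/U -> H is the same as a homomorphism nat -> G -> H
   that is constant on ~-classes.  We state surjective homomorphisms onto
   Z/pZ (additive group 'Z_p) this way. *)
Definition ultrapower_hom_onto (G : Grp) (U : (nat -> Prop) -> Prop) (p : nat)
  (phi : (nat -> G) -> 'Z_p) : Prop :=
  (forall f g : nat -> G, U (fun n => f n = g n) -> phi f = phi g) /\
  (forall f g : nat -> G, phi (fun n => gmul (f n) (g n)) = (phi f + phi g)%R) /\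
  (forall z : 'Z_p, exists f, phi f = z).

(* Main.v *)
Require Import Defs.
From mathcomp Require Import all_boot all_algebra.
From Stdlib Require Import List Classical ClassicalEpsilon FunctionalExtensionality PropExtensionality.
Set Implicit Arguments.
Unset Strict Implicit.
Unset Printing Implicit Defensive.
Definition sincl {T : Type} (X Y : T -> Prop) := forall t, X t -> Y t.
Definition bigU {T : Type} (F : (T -> Prop) -> Prop) : T -> Prop :=
  fun t => exists X, F X /\ X t.

Lemma set_ext {T : Type} (X Y : T -> Prop) : sincl X Y -> sincl Y X -> X = Y.
Proof.
intros h1 h2. apply functional_extensionality. intro t.
apply propositional_extensionality. split; auto.
Qed.

Section Zorn.
Variable T : Type.
Variable P : (T -> Prop) -> Prop.
Variable A0 : T -> Prop.
Hypothesis PA0 : P A0.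
Hypothesis Pchain : forall F : (T -> Prop) -> Prop, (exists X, F X) ->
  (forall X, F X -> P X) -> (forall X Y, F X -> F Y -> sincl X Y \/ sincl Y X) ->
  P (bigU F).
Hypothesis nomax : forall X, P X -> exists Y, P Y /\ sincl X Y /\ ~ sincl Y X.

Lemma g_ex X : exists Y, (P X -> P Y /\ ~ sincl Y X) /\ sincl X Y.
Proof.
destruct (classic (P X)) as [h|h].
- destruct (nomax h) as [Y [h1 [h2 h3]]]. exists Y; tauto.
- exists X. split; [tauto | intros t; auto].
Qed.

Definition g X := proj1_sig (constructive_indefinite_description _ (g_ex X)).
Lemma g_incl X : sincl X (g X).
Proof. unfold g; destruct constructive_indefinite_description; simpl; tauto. Qed.
Lemma g_P X : P X -> P (g X) /\ ~ sincl (g X) X.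
Proof. unfold g; destruct constructive_indefinite_description; simpl; tauto. Qed.

Inductive Tw : (T -> Prop) -> Prop :=
| tw0 : Tw A0
| twS X : Tw X -> Tw (g X)
| twU F : (forall X, F X -> Tw X) ->
    (forall X Y, F X -> F Y -> sincl X Y \/ sincl Y X) -> (exists X, F X) -> Tw (bigU F).

Lemma TwP X : Tw X -> P X.
Proof.
induction 1.
- exact PA0.
- apply g_P; auto.
- apply Pchain; auto.
Qed.
Lemma TwA0 X : Tw X -> sincl A0 X.
Proof.
induction 1.
- intros t h; exact h.
- intros t h. apply g_incl. auto.
- destruct H2 as [X FX]. intros t h. exists X. split; auto. apply (H0 X FX t h).
Qed.

Definition ext c := forall Y, Tw Y -> sincl Y c -> (exists a, c a /\ ~ Y a) -> sincl (g Y) c.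

Lemma L1 c : Tw c -> ext c -> forall Y, Tw Y -> sincl Y c \/ sincl (g c) Y.
Proof.
intros Tc Ec Y TY. induction TY.
- left. apply TwA0; auto.
- destruct IHTY as [h|h].
  + destruct (classic (exists a, c a /\ ~ X a)) as [hx|hx].
    * left. apply Ec; auto.
    * right. assert (X = c) as ->.
      { apply set_ext; auto. intros t ct. apply NNPP. intro nt. apply hx. exists t; auto. }
      intros t h'; exact h'.
  + right. intros t h'. apply g_incl. auto.
- destruct (classic (exists X, F X /\ sincl (g c) X)) as [[X [FX hX]]|hn].
  + right. intros t h'. exists X. split; auto.
  + left. intros t [X [FX Xt]]. destruct (H0 X FX) as [h|h].
    * auto.
    * exfalso. apply hn. exists X; auto.
Qed.

Lemma L2 c : Tw c -> ext c.
Proof.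
intro Tc. induction Tc.
- intros Y TY _ [a [a0 na]]. exfalso. apply na. apply (TwA0 TY). auto.
- intros Y TY hY [a [ga na]].
  destruct (L1 Tc IHTc TY) as [h|h].
  + destruct (classic (exists b, X b /\ ~ Y b)) as [hb|hb].
    * intros t h'. apply g_incl. apply (IHTc Y TY h hb t h').
    * assert (Y = X) as ->.
      { apply set_ext; auto. intros t ct. apply NNPP. intro nt. apply hb. exists t; auto. }
      intros t h'; exact h'.
  + exfalso. apply na. apply h. auto.
- intros Y TY hY [a [[X' [FX' X'a]] na]].
  destruct (L1 (H X' FX') (H0 X' FX') TY) as [h|h].
  + intros t h'. exists X'. split; auto. apply (H0 X' FX' Y TY h); eauto.
  + exfalso. apply na. apply h. apply g_incl. auto.
Qed.

Lemma Tw_chain X Y : Tw X -> Tw Y -> sincl X Y \/ sincl Y X.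
Proof.
intros TX TY. destruct (L1 TX (L2 TX) TY) as [h|h]; auto.
left. intros t h'. apply h. apply g_incl. auto.
Qed.

Lemma zorn_false : False.
Proof.
assert (TU : Tw (bigU Tw)).
{ apply twU; auto. apply Tw_chain. exists A0; constructor. }
destruct (g_P (TwP TU)) as [_ h]. apply h.
intros t h'. exists (g (bigU Tw)). split; auto. constructor; auto.
Qed.
End Zorn.

Lemma zorn (T : Type) (P : (T -> Prop) -> Prop) (A0 : T -> Prop) :
  P A0 ->
  (forall F : (T -> Prop) -> Prop, (exists X, F X) ->
    (forall X, F X -> P X) -> (forall X Y, F X -> F Y -> sincl X Y \/ sincl Y X) ->
    P (bigU F)) ->
  exists M, P M /\ forall M', P M' -> sincl M M' -> sincl M' M.
Proof.
intros PA0 Pch. apply NNPP. intro hn.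
apply (@zorn_false T P A0 PA0 Pch).
intros X PX. apply NNPP. intro h2. apply hn. exists X. split; auto.
intros M' PM' inc. apply NNPP. intro h3. apply h2. exists M'. auto.
Qed.
Section GL.
Variable H : Grp.
Local Notation "x ** y" := (gmul x y) (at level 40, left associativity).
Local Notation e := (gone H).

Lemma gmulKg (x y : H) : ginv x ** (x ** y) = y.
Proof. by rewrite gmulA gmulV gmul1. Qed.
Lemma gmulVKg (x y : H) : x ** (ginv x ** y) = y.
Proof. by rewrite gmulA gmulVr gmul1. Qed.
Lemma gmulgK (x y : H) : (y ** x) ** ginv x = y.
Proof. by rewrite -gmulA gmulVr gmul1r. Qed.
Lemma gmulgVK (x y : H) : (y ** ginv x) ** x = y.
Proof. by rewrite -gmulA gmulV gmul1r. Qed.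
Lemma ginv_uniq (x y : H) : x ** y = e -> ginv x = y.
Proof. move=> e. by rewrite -(gmul1r (ginv x)) -e gmulKg. Qed.
Lemma ginvgK (x : H) : ginv (ginv x) = x.
Proof. by apply: ginv_uniq; rewrite gmulV. Qed.
Lemma ginvMg (x y : H) : ginv (x ** y) = ginv y ** ginv x.
Proof. apply: ginv_uniq. by rewrite -gmulA (gmulA y) gmulVr gmul1 gmulVr. Qed.
Lemma gpowD (x : H) a b : gpow x (a + b) = gpow x a ** gpow x b.
Proof. elim: a => [|a IH] /=; first by rewrite gmul1. by rewrite IH gmulA. Qed.
Lemma gpowSr (x : H) a : gpow x a.+1 = gpow x a ** x.
Proof. by rewrite -addn1 gpowD /= gmul1r. Qed.
Lemma gpowM (x : H) a b : gpow x (a * b) = gpow (gpow x a) b.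
Proof. elim: b => [|b IH]; first by rewrite muln0. by rewrite mulnS gpowD IH. Qed.
Lemma gpow1 a : gpow (gone H) a = e.
Proof. elim: a => [|a IH] //=. by rewrite IH gmul1. Qed.
Lemma conj_comm (m x : H) : x ** m = (m ** gcomm m (ginv x)) ** x.
Proof. rewrite /gcomm ginvgK (gmulA m) gmulVKg -(gmulA x) gmulgVK. done. Qed.
Lemma inv_pow (z : H) n : ginv z = ginv (gpow z n.+1) ** gpow z n.
Proof. by rewrite gpowSr ginvMg -gmulA gmulV gmul1r. Qed.
End GL.
Section Hom.
Variable H : Grp.
Local Notation "x ** y" := (gmul x y) (at level 40, left associativity).
Local Notation e := (gone H).
Variable p : nat.
Hypothesis hp : prime p.
Variable v : H.
Variable M : H -> Prop.
Hypothesis Mpow : forall x, M (gpow x p).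
Hypothesis Mcomm : forall x y, M (gcomm x y).
Hypothesis Mmul : forall x y, M x -> M y -> M (x ** y).
Hypothesis Mv : ~ M v.
Hypothesis Mmax : forall M' : H -> Prop, (forall x, M x -> M' x) ->
  (forall x y, M' x -> M' y -> M' (x ** y)) -> ~ M' v -> forall x, M' x -> M x.

Lemma p_gt0 : 0 < p. Proof. exact: prime_gt0. Qed.
Lemma M1 : M e. Proof. rewrite -(gpow1 H p). exact: Mpow. Qed.
Lemma Mpown x n : M x -> M (gpow x n).
Proof. move=> Mx; elim: n => [|n IH] /=; [exact: M1 | exact: Mmul]. Qed.
Lemma invpow (x : H) n : ginv (gpow x n) = gpow (ginv x) n.
Proof.
elim: n => [|n IH] /=; first by apply: ginv_uniq; rewrite gmul1.
by rewrite ginvMg IH -gpowSr.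
Qed.
Lemma Minv x : M x -> M (ginv x).
Proof.
move=> Mx. have := p_gt0; case: p Mpow => [//|q] Mp _.
rewrite (inv_pow x q) invpow. apply: Mmul; [exact: Mp | exact: Mpown].
Qed.
Lemma Mconj m x : M m -> exists m', M m' /\ x ** m = m' ** x.
Proof. move=> Mm; exists (m ** gcomm m (ginv x)); split; [exact: Mmul | exact: conj_comm]. Qed.

Definition C k x := exists m, M m /\ x = m ** gpow v k.

Lemma C_mul a b x y : C a x -> C b y -> C (a + b) (x ** y).
Proof.
move=> [m1 [M1' ->]] [m2 [M2 ->]].
have [m' [Mm' E]] := Mconj (gpow v a) M2.
exists (m1 ** m'); split; first exact: Mmul.
by rewrite gpowD -!gmulA (gmulA (gpow v a)) E -!gmulA.
Qed.
Lemma C_Ml a m y : M m -> C a y -> C a (m ** y).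
Proof. move=> Mm [m1 [M1' ->]]; exists (m ** m1); split; [exact: Mmul | by rewrite gmulA]. Qed.
Lemma C_Mr a m y : C a y -> M m -> C a (y ** m).
Proof.
move=> [m1 [M1' ->]] Mm. have [m' [Mm' E]] := Mconj (gpow v a) Mm.
exists (m1 ** m'); split; first exact: Mmul. by rewrite -gmulA E gmulA.
Qed.
Lemma C_M m : M m -> C 0 m.
Proof. move=> Mm; exists m; split => //=; by rewrite gmul1r. Qed.
Lemma C_pow a x n : C a x -> C (a * n) (gpow x n).
Proof.
move=> Cx; elim: n => [|n IH] /=; first by rewrite muln0; exact: C_M M1.
rewrite mulnS; exact: C_mul.
Qed.
Lemma C_inv a z : C a z -> C (a * p.-1) (ginv z).
Proof.
move=> Cz. have := p_gt0; case E: p => [//|q] _ /=.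
rewrite (inv_pow z q) -E. apply: C_Ml; first by apply: Minv.
by apply: C_pow.
Qed.
Lemma C_mod a x : C a x -> C (a %% p) x.
Proof.
move=> [m [Mm ->]]. rewrite [X in gpow v X](divn_eq a p) gpowD gpowM gmulA.
exists (m ** gpow (gpow v (a %/ p)) p); split => //; exact: Mmul.
Qed.

Lemma bez c : ~~ (p %| c) -> exists u s, 1 + u * c = s * p.
Proof.
move=> nd. have cop : coprime p c by rewrite prime_coprime.
have [u _ hd] := Bezoutl c p_gt0. rewrite (eqP cop) in hd.
by exists u, ((1 + u * c) %/ p); rewrite divnK.
Qed.

Lemma not_Mvc c : ~~ (p %| c) -> ~ M (gpow v c).
Proof.
move=> nd Mc. have [u [s E]] := bez nd. apply: Mv.
have E2 : gpow v (1 + u * c) = v ** gpow v (u * c) by rewrite gpowD /= gmul1r.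
have -> : v = gpow v (1 + u * c) ** ginv (gpow v (u * c)) by rewrite E2 gmulgK.
apply: Mmul; first by rewrite E gpowM; exact: Mpow.
apply: Minv; rewrite mulnC gpowM; exact: Mpown.
Qed.

Lemma C_uniq a b x : C a x -> C b x -> a %% p = b %% p.
Proof.
wlog le : a b / b <= a.
  move=> W Ca Cb. case: (leqP b a) => h; first exact: W.
  symmetry; apply: W => //; exact: ltnW.
move=> [m1 [M1' E1]] [m2 [M2 E2]].
rewrite -(subnK le) in E1 *.
move: E1; rewrite E2 gpowD gmulA => E.
have E' : m1 ** gpow v (a - b) = m2.
  by rewrite -(gmulgK (gpow v b) (m1 ** _)) -E gmulgK.
have Mc : M (gpow v (a - b)).
  have -> : gpow v (a - b) = ginv m1 ** m2 by rewrite -E' gmulKg.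
  apply: Mmul; [exact: Minv | done].
case: (boolP (p %| (a - b))) => d.
  by rewrite -modnDml (eqP d) add0n.
by case: (not_Mvc d Mc).
Qed.

Lemma C_ex x : exists k, C k x.
Proof.
case: (classic (M x)) => Mx; first by exists 0; exact: C_M.
pose M' y := exists m j, M m /\ y = m ** gpow x j.
have sub : forall y, M y -> M' y by move=> y My; exists y, 0; split => //=; rewrite gmul1r.
have mul : forall y z, M' y -> M' z -> M' (y ** z).
  move=> y z [m [i [Mm ->]]] [m2 [j [M2 ->]]].
  have [m' [Mm' E]] := Mconj (gpow x i) M2.
  exists (m ** m'), (i + j); split; first exact: Mmul.
  by rewrite gpowD -!gmulA (gmulA (gpow x i)) E -!gmulA.
have M'v : M' v.
  apply: NNPP => nv. apply: Mx. apply: (Mmax sub mul nv).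
  by exists e, 1; split; [exact: M1 | rewrite /= gmul1 gmul1r].
case: M'v => m [j [Mm Ev]].
have Cj : C 1 (gpow x j).
  exists (ginv m); split; first exact: Minv.
  by rewrite /= gmul1r Ev gmulKg.
case: (boolP (p %| j)) => d.
  case: Mv; rewrite Ev -(divnK d) gpowM; apply: Mmul => //.
have [u [s E]] := bez d.
have Cw := C_pow u Cj.
have Mxw : M (x ** gpow x (j * u)).
  have -> : x ** gpow x (j * u) = gpow x (1 + u * j) by rewrite gpowD /= gmul1r mulnC.
  by rewrite E gpowM.
have -> : x = (x ** gpow x (j * u)) ** ginv (gpow x (j * u)) by rewrite gmulgK.
eexists; apply: C_Ml => //. rewrite gpowM. exact: C_inv Cw.
Qed.


Definition kof x := proj1_sig (constructive_indefinite_description _ (C_ex x)).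
Lemma kofP x : C (kof x) x.
Proof. rewrite /kof; case: constructive_indefinite_description => //. Qed.
Definition phi x : 'Z_p := ((kof x)%:R)%R.
Lemma Zp_eq a b : a %% p = b %% p -> (a%:R : 'Z_p)%R = (b%:R)%R.
Proof. move=> h; apply: val_inj; by rewrite /= !val_Zp_nat ?prime_gt1. Qed.

Lemma hom_exists : exists phi : H -> 'Z_p,
  (forall x y, phi (x ** y) = (phi x + phi y)%R) /\
  (forall m, M m -> phi m = 0%R) /\ (forall k : 'Z_p, exists x, phi x = k).
Proof.
exists phi; split; last split.
- move=> x y. rewrite /phi -GRing.natrD. apply: Zp_eq. apply: C_uniq (kofP _) _.
  exact: C_mul (kofP x) (kofP y).
- move=> m Mm. rewrite /phi. apply: (Zp_eq (b := 0)). apply: C_uniq (kofP _) _. exact: C_M.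
- move=> k. exists (gpow v k). rewrite /phi -[RHS]natr_Zp. apply: Zp_eq. apply: C_uniq (kofP _) _.
  exists e; split; [exact: M1 | by rewrite gmul1].
Qed.

End Hom.
Section PGdef.
Variable G : Grp.
Definition pmul (f g : nat -> G) := fun n => gmul (f n) (g n).
Definition pinv (f : nat -> G) := fun n => ginv (f n).
Definition pone : nat -> G := fun _ => gone G.
Lemma pmulA x y z : pmul x (pmul y z) = pmul (pmul x y) z.
Proof. apply: functional_extensionality => n; exact: gmulA. Qed.
Lemma pmul1 x : pmul pone x = x.
Proof. apply: functional_extensionality => n; exact: gmul1. Qed.
Lemma pmulV x : pmul (pinv x) x = pone.
Proof. apply: functional_extensionality => n; exact: gmulV. Qed.
Lemma pmul1r x : pmul x pone = x.
Proof. apply: functional_extensionality => n; exact: gmul1r. Qed.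
Lemma pmulVr x : pmul x (pinv x) = pone.
Proof. apply: functional_extensionality => n; exact: gmulVr. Qed.
Definition PG : Grp := MkGrp pmulA pmul1 pmulV pmul1r pmulVr.
Lemma gpow_PG (f : PG) k : gpow f k = (fun n => gpow (f n) k).
Proof.
elim: k => [|k IH] /=; first by [].
rewrite IH. by [].
Qed.
End PGdef.

Section Main.
Variable G : Grp.
Variable p : nat.
Hypothesis hp : prime p.
Let S := fun x : G => val_pow p x \/ val_comm x.
Hypothesis hgen : ~ generates_finitely S.
Variable U : (nat -> Prop) -> Prop.
Hypothesis hU : ultrafilter U.
Hypothesis hnp : nonprincipal U.

Definition W k (x : G) := exists l : list G, length l = k /\
  (forall y, In y l -> S y \/ S (ginv y) \/ y = gone G) /\ gprod l = x.

Lemma Umono (A B : nat -> Prop) : U A -> (forall n, A n -> B n) -> U B.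
Proof. case: hU => [_ [_ [h _]]]; exact: h. Qed.
Lemma Uand (A B : nat -> Prop) : U A -> U B -> U (fun n => A n /\ B n).
Proof. case: hU => [_ [_ [_ [h _]]]]; exact: h. Qed.
Lemma Uall (A : nat -> Prop) : (forall n, A n) -> U A.
Proof. move=> h; case: hU => [hT _]; apply: Umono hT _ => n _; exact: h. Qed.
Lemma Une (A : nat -> Prop) : U A -> exists n, A n.
Proof.
move=> hA; apply: NNPP => hn; case: hU => [_ [hF _]]; apply: hF.
apply: Umono hA _ => n An; apply: hn; by exists n.
Qed.
Lemma Ucof k : U (fun n => k <= n).
Proof.
elim: k => [|k IH]; first by apply: Uall.
have hk : U (fun n => ~ n = k).
  case: hU => [_ [_ [_ [_ h]]]]; case: (h (fun n => n = k)) => // hk.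
  by case: (hnp hk).
apply: Umono (Uand IH hk) _ => n [h1 h2].
rewrite ltn_neqAle h1 andbT; apply/eqP => e; by apply: h2.
Qed.

Lemma gprod_app (l1 l2 : list G) : gprod (l1 ++ l2) = gmul (gprod l1) (gprod l2).
Proof. elim: l1 => [|a l IH] /=; first by rewrite gmul1. by rewrite IH gmulA. Qed.
Lemma W_mul a b x y : W a x -> W b y -> W (a + b) (gmul x y).
Proof.
move=> [l1 [L1 [I1 P1]]] [l2 [L2 [I2 P2]]].
exists (l1 ++ l2); split; first by rewrite app_length L1 L2 plusE.
split; last by rewrite gprod_app P1 P2.
move=> z hz; case: (in_app_or _ _ _ hz) => h; auto.
Qed.
Lemma W_one k : W k (gone G).
Proof.
exists (repeat (gone G) k); split; first exact: repeat_length.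
split.
  move=> y hy; right; right; exact: repeat_spec hy.
elim: k => [|k IH] //=. by rewrite IH gmul1.
Qed.
Lemma W_mono a b x : W a x -> a <= b -> W b x.
Proof.
move=> Wx le. rewrite -(subnKC le) -(gmul1r x). apply: W_mul => //; exact: W_one.
Qed.
Lemma W_S x : S x -> W 1 x.
Proof. move=> Sx; exists [:: x]; split => //; split; last by rewrite /= gmul1r.
move=> y [<-|[]]; auto. Qed.

Definition gseq n := epsilon (inhabits (gone G)) (fun g => ~ W n g).
Lemma gseqP n : ~ W n (gseq n).
Proof.
rewrite /gseq. apply: (epsilon_spec (inhabits (gone G)) (fun g => ~ W n g)).
apply: NNPP => h. apply: hgen. exists n => g. apply: NNPP => h2. apply: h. exists g => h3.
apply: h2. case: h3 => l [L [I Pl]]. by exists l.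
Qed.

Definition Nst (f : PG G) := exists k, U (fun n => W k (f n)).

Lemma Nst_mul x y : Nst x -> Nst y -> Nst (gmul x y).
Proof.
move=> [a ha] [b hb]; exists (a + b).
apply: Umono (Uand ha hb) _ => n [h1 h2]. exact: W_mul.
Qed.
Lemma Nst_pow (x : PG G) : Nst (gpow x p).
Proof.
exists 1; rewrite gpow_PG; apply: Uall => n; apply: W_S. left; by exists (x n).
Qed.
Lemma Nst_comm (x y : PG G) : Nst (gcomm x y).
Proof.
exists 1; apply: Uall => n; apply: W_S. right; by exists (x n), (y n).
Qed.
Lemma Nst_v : ~ Nst (gseq : PG G).
Proof.
move=> [k hk]. case: (Une (Uand hk (Ucof k))) => n [h1 h2].
exact: (gseqP (W_mono h1 h2)).
Qed.

Definition PP (M : PG G -> Prop) := sincl Nst M /\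
  (forall x y, M x -> M y -> M (gmul x y)) /\ ~ M gseq.

Lemma exM : exists M, PP M /\ forall M', PP M' -> sincl M M' -> sincl M' M.
Proof.
apply: (@zorn _ PP Nst).
  split; first by move=> t.
  split; [exact: Nst_mul | exact: Nst_v].
move=> F [X0 FX0] hP hch; split; last split.
- move=> t ht; exists X0; split => //; by case: (hP X0 FX0) => h _; apply: h.
- move=> x y [X [FX Xx]] [Y [FY Yy]].
  case: (hch X Y FX FY) => inc.
  + exists Y; split => //; case: (hP Y FY) => _ [h _]; apply: h => //; exact: inc.
  + exists X; split => //; case: (hP X FX) => _ [h _]; apply: h => //; exact: inc.
- move=> [X [FX Xv]]. by case: (hP X FX) => _ [_ h]; apply: h.
Qed.

Lemma main_hom : exists phi : (nat -> G) -> 'Z_p, ultrapower_hom_onto U phi.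
Proof.
case: exM => M [[NM [Mmul Mv]] Mmax].
have Mpow : forall x : PG G, M (gpow x p) by move=> x; apply: NM; exact: Nst_pow.
have Mcomm : forall x y : PG G, M (gcomm x y) by move=> x y; apply: NM; exact: Nst_comm.
have Mmax' : forall M' : PG G -> Prop, (forall x, M x -> M' x) ->
    (forall x y, M' x -> M' y -> M' (gmul x y)) -> ~ M' gseq -> forall x, M' x -> M x.
  move=> M' sub mul nv x hx. apply: (Mmax M') hx; last exact: sub.
  split; [by move=> t ht; apply: sub; apply: NM | by split].
have [phi [phiM [phi0 phiS]]] := hom_exists hp Mpow Mcomm Mmul Mv Mmax'.
exists phi; split; last split.
- move=> f g hfg.
  have E : g = gmul (f : PG G) (gmul (ginv (f : PG G)) g) by rewrite gmulVKg.
  rewrite [in RHS]E phiM (phi0 (gmul (ginv (f : PG G)) g)) ?GRing.addr0 //.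
  apply: NM. exists 0. apply: Umono hfg _ => n hn.
  exists nil; split => //; split => //=. by rewrite /pmul /pinv hn gmulV.
- move=> f g; exact: (phiM f g).
- exact: phiS.
Qed.
End Main.

Theorem lemma1 (G : Grp) (p : nat) (hp : prime p)
  (hgen : ~ generates_finitely (fun x : G => val_pow p x \/ val_comm x)) :
  forall U : (nat -> Prop) -> Prop, ultrafilter U -> nonprincipal U ->
  exists phi : (nat -> G) -> 'Z_p, ultrapower_hom_onto U phi.
Proof.
move=> U hU hnp. exact: (main_hom hp hgen hU hnp).
Qed.
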